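(* Let $k\ge2$, let $\Pi\subsetneq\Sigma_k$ be a proper subshift, and let $T:\Pi\to\Sigma_k$ be the map constructed below. Then for every $y\in\Pi$, $\omega_{B^*}(T(y))\subseteq\Pi\subsetneq\omega_\sigma(T(y))$. In particular $T(y)\in Rec(\Sigma_k)\setminus BR(\Sigma_k)$.
   Context: $\Sigma_k=\{0,\dots,k-1\}^{\mathbb{N}}$ with metric $d(x,y)=\sum_{n\ge1}\delta(x_n,y_n)/2^n$ ($\delta(a,b)=0$ if $a=b$, $1$ otherwise) and shift $\sigma$. A subshift is a nonempty closed $\sigma$-invariant subset. A finite word $A$ is contained in $\Pi$ if it is a prefix of some point of $\Pi$. Construction of $T$: enumerate all finite words contained in $\Pi$ as $C_1,C_2,\dots$; fix a finite word $A_1$ not contained in $\Pi$; for $y\in\Pi$ let $Y_n$ be its first $n$ symbols; set $B_n=C_nY_nY_n\cdots Y_n$ ($Y_n$ repeated $|A_n|^2$ times) and $A_{n+1}=A_nB_nA_n$; $T(y)$ is the point of $\Sigma_k$ having every $A_n$ as a prefix. The construction requires $|C_n|=o(|A_n|)$ as $n\to\infty$. $N(x,U)=\{n\ge1:\sigma^nx\in U\}$; $B^*(S)=\limsup_{|I|\to\infty}|S\cap I|/|I|$ over intervals of consecutive integers; $\omega_{B^*}(x)=\{z: B^*(N(x,B_\varepsilon(z)))>0\ \forall\varepsilon>0\}$; $\omega_\sigma(x)$ is the $\omega$-limit set. $x\in Rec$ if $N(x,B_\varepsilon(x))\ne\emptyset$ for all $\varepsilon>0$; $x\in BR$ if $B^*(N(x,B_\varepsilon(x)))>0$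 for all $\varepsilon>0$. *)

(* Defs.v *)
From Stdlib Require Import Reals List Arith ClassicalDescription.
From Coquelicot Require Import Coquelicot.
Open Scope R_scope.

(* Points of the full shift: x : nat -> nat; x n is the paper's x_{n+1}. *)
Definition point := nat -> nat.
Definition word := list nat.

Definition InSigma (k : nat) (x : point) : Prop := forall n, (x n < k)%nat.

Definition dist (x y : point) : R :=
  Series (fun n => if Nat.eq_dec (x n) (y n) then 0 else / 2 ^ (S n)).

Definition shift (x : point) : point := fun n => x (S n).
Definition shift_iter (n : nat) (x : point) : point := fun i => x (n + i)%nat.

Definition is_subshift (k : nat) (Pi : point -> Prop) : Prop :=
  (forall x, Pi x -> InSigma k x) /\
  (exists x, Pi x) /\
  (forall x, InSigma k x ->
     (forall eps, 0 < eps -> exists p, Pi p /\ dist x p < eps) -> Pi x) /\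
  (forall x, Pi x -> Pi (shift x)).

Definition proper_subshift (k : nat) (Pi : point -> Prop) : Prop :=
  is_subshift k Pi /\ exists x, InSigma k x /\ ~ Pi x.

Definition is_prefix (w : word) (x : point) : Prop :=
  forall i, (i < length w)%nat -> List.nth i w 0%nat = x i.

Definition contained (Pi : point -> Prop) (w : word) : Prop :=
  exists p, Pi p /\ is_prefix w p.

Definition word_over (k : nat) (w : word) : Prop := List.Forall (fun a => (a < k)%nat) w.

Definition first_syms (y : point) (n : nat) : word := List.map y (List.seq 0 n).

Fixpoint repeat_word (w : word) (m : nat) : word :=
  match m with O => nil | S m' => w ++ repeat_word w m' end.

(* Aseq C y A1 n is the paper's A_{n+1}; C n is the paper's C_{n+1}.
   A_{n+1} = A_n B_n A_n, B_n = C_n Y_n^{|A_n|^2}, Y_n = first n symbols of y. *)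
Fixpoint Aseq (C : nat -> word) (y : point) (A1 : word) (n : nat) : word :=
  match n with
  | O => A1
  | S m => let a := Aseq C y A1 m in
           a ++ (C m ++ repeat_word (first_syms y (S m)) (length a * length a)) ++ a
  end.

(* T(y): the point having every A_n as prefix (|A_{n+1}| >= 2^n > n) *)
Definition Tmap (C : nat -> word) (A1 : word) (y : point) : point :=
  fun i => List.nth i (Aseq C y A1 (S i)) 0%nat.

Definition Nset (x : point) (U : point -> Prop) : nat -> Prop :=
  fun n => (1 <= n)%nat /\ U (shift_iter n x).

Definition ball (k : nat) (z : point) (eps : R) : point -> Prop :=
  fun w => InSigma k w /\ dist w z < eps.

Fixpoint cnt (P : nat -> Prop) (m L : nat) : R :=
  match L with
  | O => 0
  | Datatypes.S L' => cnt P m L' + (if excluded_middle_informative (P (m + L')%nat) then 1 else 0)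
  end.

Definition upper_banach (S : nat -> Prop) : Rbar :=
  LimSup_seq (fun L => real (Sup_seq (fun m => Finite (cnt S m L / INR L)))).

Definition omega_B (k : nat) (x : point) : point -> Prop :=
  fun z => InSigma k z /\
    forall eps, 0 < eps -> Rbar_lt (Finite 0) (upper_banach (Nset x (ball k z eps))).

Definition omega_sigma (k : nat) (x : point) : point -> Prop :=
  fun z => InSigma k z /\
    forall eps, 0 < eps -> forall N, exists n, (N <= n)%nat /\ dist (shift_iter n x) z < eps.

Definition Rec (k : nat) (x : point) : Prop :=
  InSigma k x /\ forall eps, 0 < eps -> exists n, Nset x (ball k x eps) n.

Definition BR (k : nat) (x : point) : Prop :=
  InSigma k x /\
  forall eps, 0 < eps -> Rbar_lt (Finite 0) (upper_banach (Nset x (ball k x eps))).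

(* Main.v *)
Require Import Defs.
From Stdlib Require Import Reals List Arith.
From Coquelicot Require Import Coquelicot.
Open Scope R_scope.
From Stdlib Require Import Lia Lra ClassicalDescription FunctionalExtensionality Classical.
Open Scope R_scope.

Fixpoint cntn (P : nat -> Prop) (m L : nat) : nat :=
  match L with
  | O => O
  | S L' => (cntn P m L' + (if excluded_middle_informative (P (m + L')%nat) then 1 else 0))%nat
  end.

Lemma cnt_cntn P m L : cnt P m L = INR (cntn P m L).
Proof.
  induction L; simpl; auto.
  rewrite IHL, plus_INR. destruct excluded_middle_informative; simpl; lra.
Qed.

Local Open Scope nat_scope.

Lemma cntn_le P m L : cntn P m L <= L.
Proof. induction L; simpl; auto. destruct excluded_middle_informative; lia. Qed.

Lemma cntn_split P m a b : cntn P m (a+b) = cntn P m a + cntn P (m+a) b.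
Proof.
  induction b; simpl. rewrite Nat.add_0_r; lia.
  rewrite Nat.add_succ_r; simpl. rewrite IHb.
  replace (m+a+b) with (m+(a+b)) by lia. lia.
Qed.

Lemma cntn_mono P Q m L : (forall q, m <= q < m+L -> P q -> Q q) -> cntn P m L <= cntn Q m L.
Proof.
  induction L; simpl; intros H; auto.
  assert (IH := IHL ltac:(intros q Hq; apply H; lia)).
  destruct (excluded_middle_informative (P (m+L))) as [HP|HP];
  destruct (excluded_middle_informative (Q (m+L))) as [HQ|HQ]; try lia.
  exfalso. apply HQ, H; auto; lia.
Qed.

Lemma cntn_lower P m L T : (forall q, m <= q < m+L -> P q -> T <= q) -> cntn P m L <= m + L - T.
Proof.
  induction L; simpl; intros H. lia.
  assert (IH := IHL ltac:(intros q Hq; apply H; lia)).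
  destruct (excluded_middle_informative (P (m+L))) as [HP|HP]; try lia.
  assert (T <= m + L) by (apply H; auto; lia). lia.
Qed.

Definition Z P s e := cntn P s (e - s).

Lemma Z_add P s t e : s <= t -> t <= e -> Z P s e = Z P s t + Z P t e.
Proof.
  intros. unfold Z. replace (e - s) with ((t - s) + (e - t)) by lia.
  rewrite cntn_split. replace (s + (t - s)) with t by lia. auto.
Qed.

Lemma Z_le P s e : Z P s e <= e - s.
Proof. apply cntn_le. Qed.

Lemma Z_lower P s e T : s <= e -> (forall q, s <= q < e -> P q -> T <= q) -> Z P s e <= e - T.
Proof.
  intros He H. unfold Z. eapply Nat.le_trans. apply cntn_lower.
  intros q Hq; apply H; lia. lia.
Qed.

Lemma Z_mono P Q s e : (forall q, s <= q < e -> P q -> Q q) -> Z P s e <= Z Q s e.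
Proof. intros H. apply cntn_mono. intros q Hq; apply H; lia. Qed.
Open Scope R_scope.
Local Open Scope nat_scope.

Lemma main_density (P : nat -> Prop) (a b : nat -> nat) (A B : nat -> nat -> Prop) (L D m : nat)
 (HA : forall n p, A (S n) p -> A n p /\ B n (p + a n) /\ A n (p + a n + b n))
 (Ha : forall n, a (S n) = a n + b n + a n)
 (HB : forall n u s e, m <= n -> B n u -> u <= s -> s <= e -> e <= u + b n ->
        4*D*Z P s e <= (e - s) + 12*D*L)
 (Hb : forall n, a n * a n <= b n)
 (Ham : 8*D + 12*D*L <= a m) :
 forall n, m <= n -> forall p, A n p ->
   (2*D*Z P p (p + a n) <= a n + 2*D*a m) /\
   (forall s, p <= s <= p + a n -> D * Z P s (p + a n) <= (p + a n - s) + (D*a m + 3*D*L)) /\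
   (forall e, p <= e <= p + a n -> D * Z P p e <= (e - p) + (D*a m + 3*D*L)) /\
   (forall s e, p <= s -> s <= e -> e <= p + a n -> D * Z P s e <= (e - s) + (D*a m + 6*D*L)).
Proof.
  assert (Hmono : forall n, m <= n -> a m <= a n).
  { intros n Hn; induction Hn; auto. rewrite Ha; lia. }
  intros n Hn; induction Hn as [|n Hn IH]; intros p Hp.
  - assert (HZ : forall s e, Z P s e <= e - s) by (intros; apply Z_le).
    assert (HDZ : forall s e, s <= e -> e <= p + a m -> p <= s -> D * Z P s e <= D * a m).
    { intros s e H1 H2 H3. apply Nat.mul_le_mono_l. specialize (HZ s e). lia. }
    repeat split.
    + specialize (HDZ p (p + a m) ltac:(lia) ltac:(lia) ltac:(lia)). lia.
    + intros s Hs. specialize (HDZ s (p + a m) ltac:(lia) ltac:(lia) ltac:(lia)). lia.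
    + intros e He. specialize (HDZ p e ltac:(lia) ltac:(lia) ltac:(lia)). lia.
    + intros s e H1 H2 H3. specialize (HDZ s e ltac:(lia) ltac:(lia) ltac:(lia)). lia.
  - destruct (HA n p Hp) as (HA1 & HB1 & HA2).
    assert (Hamn := Hmono n Hn).
    assert (X1 : 4*D*a n <= b n).
    { specialize (Hb n). assert (4*D <= a n) by lia.
      assert (4*D*a n <= a n * a n) by (apply Nat.mul_le_mono_r; lia). lia. }
    assert (X2 : 4*D*a m + 12*D*L <= b n).
    { specialize (Hb n). destruct (a m) as [|am] eqn:E.
      - assert (D = 0) by lia. subst. lia.
      - assert (S am * (4*D + 12*D*L) <= S am * a n) by (apply Nat.mul_le_mono_l; lia).
        assert (S am * a n <= a n * a n) by (apply Nat.mul_le_mono_r; lia). nia. }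
    destruct (IH _ HA1) as (F1 & S1 & P1 & G1).
    destruct (IH _ HA2) as (F2 & S2 & P2 & G2).
    set (p1 := p + a n) in *. set (p2 := p1 + b n) in *.
    assert (E3 : p + a (S n) = p2 + a n) by (rewrite Ha; unfold p2, p1; lia).
    rewrite E3.
    assert (HBf : forall s e, p1 <= s -> s <= e -> e <= p2 -> 4*D*Z P s e <= (e - s) + 12*D*L).
    { intros s e H1 H2 H3. apply (HB n p1); auto. }
    assert (HZ : forall s e, Z P s e <= e - s) by (intros; apply Z_le).
    assert (DZ1 : forall s e, p <= s -> s <= e -> e <= p1 -> D * Z P s e <= D * a n).
    { intros s e H1 H2 H3. apply Nat.mul_le_mono_l. specialize (HZ s e). unfold p1 in *. lia. }
    assert (DZ2 : forall s e, p2 <= s -> s <= e -> e <= p2 + a n -> D * Z P s e <= D * a n).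
    { intros s e H1 H2 H3. apply Nat.mul_le_mono_l. specialize (HZ s e). lia. }
    assert (Hp12 : p1 <= p2) by (unfold p2; lia).
    assert (Hpp1 : p <= p1) by (unfold p1; lia).
    assert (Ep1 : p1 = p + a n) by reflexivity.
    assert (Ep2 : p2 = p1 + b n) by reflexivity.
    clearbody p1 p2.
    repeat split.
    + rewrite (Z_add P p p1 (p2 + a n)) by lia. rewrite (Z_add P p1 p2 (p2 + a n)) by lia.
      specialize (HBf p1 p2 ltac:(lia) ltac:(lia) ltac:(lia)).
      lia.
    + intros s Hs.
      destruct (le_lt_dec p2 s).
      * apply S2; lia.
      * rewrite (Z_add P s p2 (p2 + a n)) by lia.
        destruct (le_lt_dec p1 s).
        -- specialize (HBf s p2 ltac:(lia) ltac:(lia) ltac:(lia)). lia.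
        -- rewrite (Z_add P s p1 p2) by lia.
           specialize (HBf p1 p2 ltac:(lia) ltac:(lia) ltac:(lia)).
           specialize (DZ1 s p1 ltac:(lia) ltac:(lia) ltac:(lia)). lia.
    + intros e He.
      destruct (le_lt_dec e p1).
      * apply P1; lia.
      * rewrite (Z_add P p p1 e) by lia.
        destruct (le_lt_dec e p2).
        -- specialize (HBf p1 e ltac:(lia) ltac:(lia) ltac:(lia)). lia.
        -- rewrite (Z_add P p1 p2 e) by lia.
           specialize (HBf p1 p2 ltac:(lia) ltac:(lia) ltac:(lia)).
           specialize (DZ2 p2 e ltac:(lia) ltac:(lia) ltac:(lia)). lia.
    + intros s e H1 H2 H3.
      destruct (le_lt_dec e p1).
      * apply G1; lia.
      * destruct (le_lt_dec p2 s).
        -- apply G2; lia.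
        -- destruct (le_lt_dec p1 s); destruct (le_lt_dec e p2).
           ++ specialize (HBf s e ltac:(lia) ltac:(lia) ltac:(lia)). lia.
           ++ rewrite (Z_add P s p2 e) by lia.
              specialize (HBf s p2 ltac:(lia) ltac:(lia) ltac:(lia)).
              specialize (P2 e ltac:(lia)). lia.
           ++ rewrite (Z_add P s p1 e) by lia.
              specialize (HBf p1 e ltac:(lia) ltac:(lia) ltac:(lia)).
              specialize (S1 s ltac:(lia)). lia.
           ++ rewrite (Z_add P s p1 e) by lia. rewrite (Z_add P p1 p2 e) by lia.
              specialize (HBf p1 p2 ltac:(lia) ltac:(lia) ltac:(lia)).
              specialize (DZ1 s p1 ltac:(lia) ltac:(lia) ltac:(lia)).
              specialize (DZ2 p2 e ltac:(lia) ltac:(lia) ltac:(lia)). lia.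
Qed.
Open Scope R_scope.
Local Open Scope nat_scope.

Definition hasw (x : point) (w : word) (p : nat) : Prop :=
  forall i, i < length w -> x (p + i) = nth i w 0.

Lemma hasw_app x u v p : hasw x (u ++ v) p -> hasw x u p /\ hasw x v (p + length u).
Proof.
  intros H; split; intros i Hi.
  - rewrite H by (rewrite length_app; lia). rewrite app_nth1; auto.
  - replace (p + length u + i) with (p + (length u + i)) by lia.
    rewrite H by (rewrite length_app; lia). rewrite app_nth2 by lia.
    f_equal; lia.
Qed.

Lemma length_repeat Y r : length (repeat_word Y r) = r * length Y.
Proof. induction r; simpl; auto. rewrite length_app, IHr; lia. Qed.

Lemma sub_contained (Pi : point -> Prop) (HPs : forall j p, Pi p -> Pi (shift_iter j p))
  x w u W q : contained Pi w -> hasw x w u -> u <= q -> q + length W <= u + length w ->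
  hasw x W q -> contained Pi W.
Proof.
  intros [p [Hp Hpre]] Hw Huq Hq HW.
  exists (shift_iter (q - u) p). split; auto.
  intros i Hi. unfold shift_iter.
  rewrite <- HW by auto. rewrite <- Hpre by lia.
  rewrite <- Hw by lia. f_equal; lia.
Qed.

Lemma seg_count (Pi : point -> Prop) (HPs : forall j p, Pi p -> Pi (shift_iter j p))
  x W (HW : ~ contained Pi W) w u s e :
  contained Pi w -> hasw x w u -> u <= s -> s <= e -> e <= u + length w ->
  Z (hasw x W) s e <= length W.
Proof.
  intros Hc Hw H1 H2 H3.
  eapply Nat.le_trans. apply (Z_lower _ _ _ (u + length w + 1 - length W)); auto.
  intros q Hq Ho.
  destruct (le_lt_dec (q + length W) (u + length w)) as [Hl|Hl]; [|lia].
  exfalso. apply HW. apply (sub_contained Pi HPs x w u W q); auto; lia.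
  lia.
Qed.

Lemma rep_count (Pi : point -> Prop) (HPs : forall j p, Pi p -> Pi (shift_iter j p))
  x W (HW : ~ contained Pi W) Y (HY : contained Pi Y) :
  forall r c, hasw x (repeat_word Y r) c ->
  (forall e, c <= e <= c + r * length Y ->
     length Y * Z (hasw x W) c e <= length W * (e - c) + length W * length Y) /\
  (forall s e, c <= s -> s <= e -> e <= c + r * length Y ->
     length Y * Z (hasw x W) s e <= length W * (e - s) + 2 * length W * length Y).
Proof.
  set (L := length W). set (l := length Y).
  induction r; intros c Hc.
  - simpl. split.
    + intros e He. assert (e = c) by lia. subst. unfold Z. rewrite Nat.sub_diag. simpl. lia.
    + intros s e H1 H2 H3. assert (s = e) by lia. subst. unfold Z. rewrite Nat.sub_diag. simpl. lia.
  - simpl in Hc. apply hasw_app in Hc. destruct Hc as [H1 H2].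
    destruct (IHr _ H2) as [IP IG]. fold l in IP, IG.
    assert (Hseg : forall s e, c <= s -> s <= e -> e <= c + l -> l * Z (hasw x W) s e <= l * L).
    { intros s e A1 A2 A3. apply Nat.mul_le_mono_l. eapply seg_count; eauto. }
    split.
    + intros e He. destruct (le_lt_dec e (c + l)).
      * specialize (Hseg c e ltac:(lia) ltac:(lia) ltac:(lia)). nia.
      * rewrite (Z_add _ c (c + l) e) by lia.
        specialize (Hseg c (c+l) ltac:(lia) ltac:(lia) ltac:(lia)).
        specialize (IP e ltac:(simpl; lia)).
        replace (e - c) with ((e - (c + l)) + l) by lia. nia.
    + intros s e A1 A2 A3.
      destruct (le_lt_dec (c + l) s).
      * apply IG; simpl in *; lia.
      * destruct (le_lt_dec e (c + l)).
        -- specialize (Hseg s e ltac:(lia) ltac:(lia) ltac:(lia)). nia.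
        -- rewrite (Z_add _ s (c + l) e) by lia.
           specialize (Hseg s (c+l) ltac:(lia) ltac:(lia) ltac:(lia)).
           specialize (IP e ltac:(simpl; lia)).
           assert (L * (e - (c + l)) <= L * (e - s)) by (apply Nat.mul_le_mono_l; lia).
           nia.
Qed.

Lemma B_count (Pi : point -> Prop) (HPs : forall j p, Pi p -> Pi (shift_iter j p))
  x W (HW : ~ contained Pi W) Y (HY : contained Pi Y) Cw (HC : contained Pi Cw) r u s e :
  hasw x (Cw ++ repeat_word Y r) u -> u <= s -> s <= e -> e <= u + length (Cw ++ repeat_word Y r) ->
  length Y * Z (hasw x W) s e <= length W * (e - s) + 3 * length W * length Y.
Proof.
  intros H A1 A2 A3. rewrite length_app, length_repeat in A3.
  apply hasw_app in H. destruct H as [H1 H2].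
  destruct (rep_count Pi HPs x W HW Y HY r _ H2) as [IP IG].
  set (L := length W) in *. set (l := length Y) in *.
  assert (Hseg : forall s e, u <= s -> s <= e -> e <= u + length Cw -> l * Z (hasw x W) s e <= l * L).
  { intros s' e' B1 B2 B3. apply Nat.mul_le_mono_l. eapply seg_count; eauto. }
  destruct (le_lt_dec e (u + length Cw)).
  - specialize (Hseg s e ltac:(lia) ltac:(lia) ltac:(lia)). nia.
  - destruct (le_lt_dec (u + length Cw) s).
    + specialize (IG s e ltac:(lia) ltac:(lia) ltac:(lia)). nia.
    + rewrite (Z_add _ s (u + length Cw) e) by lia.
      specialize (Hseg s (u + length Cw) ltac:(lia) ltac:(lia) ltac:(lia)).
      specialize (IP e ltac:(lia)).
      assert (L * (e - (u + length Cw)) <= L * (e - s)) by (apply Nat.mul_le_mono_l; lia).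
      nia.
Qed.

Lemma B_count4 l L D Zv d : 0 < l -> 4 * D * L <= l -> l * Zv <= L * d + 3 * L * l -> 4 * D * Zv <= d + 12 * D * L.
Proof.
  intros H0 H1 H2. destruct l as [|l']. { lia. }
  apply (Nat.mul_le_mono_pos_l _ _ (S l')). lia.
  assert (4 * D * (S l' * Zv) <= 4 * D * (L * d + 3 * L * S l')) by (apply Nat.mul_le_mono_l; auto).
  assert (4 * D * L * d <= S l' * d) by (apply Nat.mul_le_mono_r; auto).
  nia.
Qed.
Open Scope R_scope.

Definition gt_ (n : nat) : R := / 2 ^ (S n).

Lemma gt_pos n : 0 < gt_ n.
Proof. unfold gt_. apply Rinv_0_lt_compat, pow_lt; lra. Qed.

Lemma is_series_gt : is_series gt_ 1.
Proof.
  assert (Habs : Rabs (/2) < 1) by (rewrite Rabs_right; lra).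
  assert (H := is_series_scal_l (/2) _ _ (is_series_geom (/2) Habs)).
  replace 1 with (scal (/2) (/(1 - /2))).
  2:{ unfold scal; simpl; unfold mult; simpl. field. }
  eapply is_series_ext; [|exact H].
  intros n. unfold gt_, scal; simpl. unfold mult; simpl. rewrite pow_inv. field. apply pow_nonzero; lra.
Qed.

Lemma ex_series_gt : ex_series gt_.
Proof. eexists; apply is_series_gt. Qed.

Definition dterm (u v : point) n : R := if Nat.eq_dec (u n) (v n) then 0 else / 2 ^ (S n).

Lemma dterm_bd u v n : 0 <= dterm u v n <= gt_ n.
Proof. unfold dterm. destruct Nat.eq_dec; pose proof (gt_pos n); unfold gt_ in *; lra. Qed.

Lemma ex_series_dterm u v : ex_series (dterm u v).
Proof.
  apply (@ex_series_le R_AbsRing R_CompleteNormedModule _ gt_). intros n. unfold norm; simpl. unfold abs; simpl.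
  destruct (dterm_bd u v n). rewrite Rabs_right; lra. apply ex_series_gt.
Qed.

Lemma Series_zero : Series (fun _ => 0) = 0.
Proof.
  rewrite (Series_ext (fun _ => 0) (fun n => 0 * gt_ n)) by (intros; ring).
  rewrite Series_scal_l. ring.
Qed.

Lemma dist_agree (u v : point) (L : nat) : (forall i, (i < L)%nat -> u i = v i) -> Defs.dist u v <= / 2 ^ L.
Proof.
  intros H. unfold Defs.dist. fold (dterm u v).
  rewrite (Series_incr_n_aux _ L).
  2:{ intros k Hk. unfold dterm. destruct Nat.eq_dec; auto. exfalso; auto. }
  eapply Rle_trans. apply (Series_le _ (fun k => / 2 ^ L * gt_ k)).
  - intros n. destruct (dterm_bd u v (L + n)). split; auto. eapply Rle_trans; eauto.
    unfold gt_. rewrite <- Rinv_mult.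
    replace (S (L + n)) with (L + S n)%nat by lia. rewrite pow_add. apply Rle_refl.
  - exists (scal (/2^L) 1). eapply is_series_ext; [|exact (is_series_scal_l (/2^L) _ _ is_series_gt)]. intros; reflexivity.
  - rewrite Series_scal_l. rewrite (is_series_unique _ _ is_series_gt). lra.
Qed.

Lemma sum_ge_last (a : nat -> R) i : (forall n, 0 <= a n) -> a i <= sum_f_R0 a i.
Proof.
  intros H. destruct i; simpl. lra.
  pose proof (cond_pos_sum a i H). lra.
Qed.

Lemma dist_diff (u v : point) (L : nat) : Defs.dist u v < / 2 ^ L -> forall i, (i < L)%nat -> u i = v i.
Proof.
  intros Hd i Hi. destruct (Nat.eq_dec (u i) (v i)) as [E|E]; auto. exfalso.
  unfold Defs.dist in Hd. fold (dterm u v) in Hd.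
  rewrite (Series_incr_n _ (S i)) in Hd by (lia || apply ex_series_dterm). simpl pred in Hd.
  assert (H1 : dterm u v i <= sum_f_R0 (dterm u v) i).
  { apply sum_ge_last. intros n; apply dterm_bd. }
  assert (H2 : 0 <= Series (fun k => dterm u v (S i + k))).
  { rewrite <- Series_zero. apply Series_le.
    - intros n; split; [lra| apply dterm_bd].
    - apply (ex_series_incr_n (dterm u v) (S i)). apply ex_series_dterm. }
  assert (H3 : dterm u v i = / 2 ^ S i) by (unfold dterm; destruct Nat.eq_dec; tauto).
  assert (H4 : / 2 ^ L <= / 2 ^ S i).
  { apply Rinv_le_contravar. apply pow_lt; lra. apply Rle_pow; [lra | lia]. }
  lra.
Qed.

Lemma INR_lt_pow2 n : INR n < 2 ^ n.
Proof.
  induction n. simpl; lra. rewrite S_INR. simpl. pose proof (Rle_pow 2 0 n ltac:(lra) ltac:(lia)). simpl in H. lra.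
Qed.

Lemma small_pow eps : 0 < eps -> exists L, / 2 ^ L < eps.
Proof.
  intros He. destruct (archimed_cor1 eps He) as [N [HN1 HN2]]. exists N.
  eapply Rle_lt_trans; [|exact HN1]. apply Rinv_le_contravar.
  apply lt_0_INR; lia. apply Rlt_le, INR_lt_pow2.
Qed.
Open Scope R_scope.

Lemma ratio_bd (c L D K : nat) : (1 <= D)%nat -> (K < L)%nat -> (D * c <= L + K)%nat ->
  INR c / INR L <= 2 / INR D.
Proof.
  intros HD HL H.
  assert (HL0 : 0 < INR L) by (apply lt_0_INR; lia).
  assert (HD0 : 0 < INR D) by (apply lt_0_INR; lia).
  assert (H2 : INR D * INR c <= 2 * INR L).
  { rewrite <- mult_INR. replace 2 with (INR 2) by (simpl; lra). rewrite <- mult_INR.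
    apply le_INR. lia. }
  apply (Rmult_le_reg_r (INR L * INR D)). nra.
  field_simplify; nra.
Qed.

Lemma ub_not_pos (Sp : nat -> Prop) :
  (forall D, (1 <= D)%nat -> exists K, forall s I, (D * cntn Sp s I <= I + K)%nat) ->
  ~ Rbar_lt 0 (upper_banach Sp).
Proof.
  intros HD Hlt.
  assert (Hb : forall D, (1 <= D)%nat -> Rbar_le (upper_banach Sp) (2 / INR D)).
  { intros D HD1. destruct (HD D HD1) as [K HK].
    unfold upper_banach. rewrite <- (LimSup_seq_const (2 / INR D)).
    apply LimSup_le. exists (S K). intros L HL.
    assert (Hr : forall m, cnt Sp m L / INR L <= 2 / INR D).
    { intros m. rewrite cnt_cntn. apply (ratio_bd _ _ _ K); auto. }
    assert (Hup : Rbar_le (Sup_seq (fun m => Finite (cnt Sp m L / INR L))) (2 / INR D)).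
    { apply Rbar_not_lt_le. intros Hc. apply Sup_seq_minor_lt in Hc. destruct Hc as [n Hn].
      simpl in Hn. specialize (Hr n). lra. }
    assert (Hlo : Rbar_le 0 (Sup_seq (fun m => Finite (cnt Sp m L / INR L)))).
    { apply (Sup_seq_minor_le _ 0 0). simpl. rewrite cnt_cntn.
      apply Rdiv_le_0_compat. apply pos_INR. apply lt_0_INR; lia. }
    destruct (Sup_seq (fun m => Finite (cnt Sp m L / INR L))); simpl in *; try tauto. }
  destruct (upper_banach Sp) as [l| |] eqn:E; simpl in Hlt; try tauto.
  - destruct (archimed_cor1 (l/2) ltac:(lra)) as [N [HN1 HN2]].
    specialize (Hb N ltac:(lia)). simpl in Hb.
    assert (0 < INR N) by (apply lt_0_INR; lia).
    assert (2 / INR N < l).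
    { replace (2 / INR N) with (2 * / INR N) by (unfold Rdiv; ring). lra. }
    lra.
  - specialize (Hb 1%nat ltac:(lia)). simpl in Hb. tauto.
Qed.
Open Scope R_scope.
Local Open Scope nat_scope.

Definition aL C y A1 n := length (Aseq C y A1 n).
Definition Bw C y A1 n := C n ++ repeat_word (first_syms y (S n)) (aL C y A1 n * aL C y A1 n).

Lemma Aseq_S C y A1 n : Aseq C y A1 (S n) = Aseq C y A1 n ++ Bw C y A1 n ++ Aseq C y A1 n.
Proof. reflexivity. Qed.

Lemma length_first y n : length (first_syms y n) = n.
Proof. unfold first_syms. rewrite length_map, length_seq. auto. Qed.

Lemma nth_first z n i : i < n -> nth i (first_syms z n) 0 = z i.
Proof.
  intros H. unfold first_syms. rewrite (nth_indep _ 0 (z 0)) by (rewrite length_map, length_seq; auto).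
  rewrite map_nth, seq_nth; auto.
Qed.

Lemma aL_S C y A1 n : aL C y A1 (S n) = aL C y A1 n + length (Bw C y A1 n) + aL C y A1 n.
Proof. unfold aL at 1. rewrite Aseq_S, !length_app. unfold aL. lia. Qed.

Lemma b_ge C y A1 n : aL C y A1 n * aL C y A1 n <= length (Bw C y A1 n).
Proof. unfold Bw. rewrite length_app, length_repeat, length_first. nia. Qed.

Lemma aL_ge C y A1 n : A1 <> nil -> S n <= aL C y A1 n.
Proof.
  intros H. induction n.
  - unfold aL; simpl. destruct A1; simpl; [congruence| lia].
  - rewrite aL_S. lia.
Qed.

Lemma Aseq_prefix C y A1 n n' : n <= n' -> exists t, Aseq C y A1 n' = Aseq C y A1 n ++ t.
Proof.
  induction 1.
  - exists nil. rewrite app_nil_r; auto.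
  - destruct IHle as [t Ht]. exists (t ++ Bw C y A1 m ++ Aseq C y A1 m).
    rewrite app_assoc, <- Ht. apply Aseq_S.
Qed.

Lemma hasw_T C y A1 n : A1 <> nil -> hasw (Tmap C A1 y) (Aseq C y A1 n) 0.
Proof.
  intros HA i Hi. unfold Tmap. change (0 + i) with i.
  destruct (le_lt_dec n (S i)) as [H|H].
  - destruct (Aseq_prefix C y A1 _ _ H) as [t Ht]. rewrite Ht, app_nth1; auto.
  - destruct (Aseq_prefix C y A1 (S i) n ltac:(lia)) as [t Ht]. rewrite Ht, app_nth1; auto.
    pose proof (aL_ge C y A1 (S i) HA). unfold aL in H0. lia.
Qed.

Lemma hasw_block C y A1 x n p : hasw x (Aseq C y A1 (S n)) p ->
  hasw x (Aseq C y A1 n) p /\ hasw x (Bw C y A1 n) (p + aL C y A1 n) /\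
  hasw x (Aseq C y A1 n) (p + aL C y A1 n + length (Bw C y A1 n)).
Proof.
  rewrite Aseq_S. intros H. apply hasw_app in H. destruct H as [H1 H2].
  apply hasw_app in H2. destruct H2 as [H2 H3]. unfold aL. auto.
Qed.

Lemma occ_density (Pi : point -> Prop) (HPs : forall j p, Pi p -> Pi (shift_iter j p))
  C y A1 W (HW : ~ contained Pi W) (HA : A1 <> nil)
  (HC : forall n, contained Pi (C n)) (HY : forall n, contained Pi (first_syms y n)) :
  forall D, exists K, forall s I, D * cntn (hasw (Tmap C A1 y) W) s I <= I + K.
Proof.
  intros D. set (x := Tmap C A1 y). set (L := length W).
  set (m := 4*D*L + 8*D + 12*D*L).
  assert (Ham : 8*D + 12*D*L <= aL C y A1 m) by (pose proof (aL_ge C y A1 m HA); unfold m in *; lia).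
  assert (HB : forall n u s e, m <= n -> hasw x (Bw C y A1 n) u -> u <= s -> s <= e ->
            e <= u + length (Bw C y A1 n) -> 4*D*Z (hasw x W) s e <= (e - s) + 12*D*L).
  { intros n u s e Hn Hu H1 H2 H3.
    apply (B_count4 (S n)). lia. unfold m in Hn; lia.
    pose proof (B_count Pi HPs x W HW (first_syms y (S n)) (HY _) (C n) (HC n) _ u s e Hu H1 H2 H3) as HH.
    rewrite length_first in HH. exact HH. }
  pose proof (main_density (hasw x W) (aL C y A1) (fun n => length (Bw C y A1 n))
    (fun n p => hasw x (Aseq C y A1 n) p) (fun n u => hasw x (Bw C y A1 n) u) L D m
    (fun n p H => hasw_block C y A1 x n p H) (aL_S C y A1) HB (b_ge C y A1) Ham) as Hmain.
  exists (D * aL C y A1 m + 6*D*L). intros s I.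
  destruct (Hmain (m + s + I) ltac:(lia) 0 (hasw_T C y A1 _ HA)) as (_ & _ & _ & G).
  pose proof (aL_ge C y A1 (m + s + I) HA).
  specialize (G s (s + I) ltac:(lia) ltac:(lia) ltac:(lia)).
  unfold Z in G. replace (s + I - s) with I in G by lia. exact G.
Qed.
Open Scope R_scope.

Lemma word_over_repeat k Y r : word_over k Y -> word_over k (repeat_word Y r).
Proof. intros H; induction r; simpl; [constructor|]. apply Forall_app; auto. Qed.

Lemma word_over_first k y n : InSigma k y -> word_over k (first_syms y n).
Proof.
  intros H. unfold word_over, first_syms. apply Forall_forall. intros a Ha.
  apply in_map_iff in Ha. destruct Ha as [i [<- _]]. apply H.
Qed.

Lemma word_over_Aseq k C y A1 n : word_over k A1 -> (forall n, word_over k (C n)) -> InSigma k y ->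
  word_over k (Aseq C y A1 n).
Proof.
  intros H1 H2 H3. induction n; [exact H1|].
  rewrite Aseq_S. unfold Bw, word_over in *.
  apply Forall_app; split; auto. apply Forall_app; split; auto.
  apply Forall_app; split; auto.
  apply word_over_repeat, word_over_first; auto.
Qed.

Lemma nth_word_over k w i : (0 < k)%nat -> word_over k w -> (nth i w 0 < k)%nat.
Proof.
  intros Hk Hw. destruct (Nat.lt_ge_cases i (length w)).
  - unfold word_over in Hw. rewrite Forall_forall in Hw. apply Hw, nth_In; auto.
  - rewrite nth_overflow; auto.
Qed.

Lemma shift_Pi (Pi : point -> Prop) : (forall x, Pi x -> Pi (shift x)) ->
  forall j p, Pi p -> Pi (shift_iter j p).
Proof.
  intros Hs j. induction j; intros p Hp.
  - exact Hp.
  - replace (shift_iter (S j) p) with (shift (shift_iter j p)).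
    + apply Hs, IHj; auto.
    + apply functional_extensionality. intros i. unfold shift, shift_iter. f_equal; lia.
Qed.

Theorem proposition3p2
  (k : nat) (Pi : point -> Prop) (C : nat -> word) (A1 : word) (y : point) :
  (2 <= k)%nat ->
  proper_subshift k Pi ->
  (forall n, word_over k (C n) /\ contained Pi (C n)) ->
  (forall w, word_over k w -> contained Pi w -> exists n, C n = w) ->
  (forall n m, C n = C m -> n = m) ->
  word_over k A1 -> ~ contained Pi A1 ->
  Pi y ->
  is_lim_seq (fun n => INR (length (C n)) / INR (length (Aseq C y A1 n))) 0 ->
  (forall z, omega_B k (Tmap C A1 y) z -> Pi z) /\
  (forall z, Pi z -> omega_sigma k (Tmap C A1 y) z) /\
  (exists z, omega_sigma k (Tmap C A1 y) z /\ ~ Pi z) /\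
  Rec k (Tmap C A1 y) /\ ~ BR k (Tmap C A1 y).
Proof.
  intros Hk [Hsub _] HCn HCall HCinj HA1w HA1 Hy _.
  destruct Hsub as (HPk & [p0 Hp0] & Hclosed & Hshift).
  pose proof (shift_Pi Pi Hshift) as HPs.
  assert (HAne : A1 <> nil).
  { intros E. apply HA1. subst. exists p0. split; auto. intros i Hi; simpl in Hi; lia. }
  set (x := Tmap C A1 y).
  assert (Hxs : InSigma k x).
  { intros i. unfold x, Tmap. apply nth_word_over. lia.
    apply word_over_Aseq; auto. intros n; apply HCn. }
  assert (HCc : forall n, contained Pi (C n)) by (intros n; apply HCn).
  assert (HYc : forall n, contained Pi (first_syms y n)).
  { intros n. exists y. split; auto. intros i Hi. rewrite length_first in Hi. apply nth_first; auto. }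
  assert (Hrec : forall L N, exists q, (N <= q)%nat /\ (1 <= q)%nat /\ forall i, (i < L)%nat -> x (q + i)%nat = x i).
  { intros L N. set (n0 := (L + N)%nat).
    exists (aL C y A1 n0 + length (Bw C y A1 n0))%nat.
    pose proof (aL_ge C y A1 n0 HAne).
    destruct (hasw_block C y A1 x n0 0 (hasw_T C y A1 (S n0) HAne)) as (_ & _ & H3).
    pose proof (hasw_T C y A1 n0 HAne) as H0.
    split; [unfold n0 in *; lia|]. split; [lia|].
    intros i Hi. specialize (H3 i ltac:(unfold aL in *; unfold n0 in *; lia)).
    specialize (H0 i ltac:(unfold aL in *; unfold n0 in *; lia)).
    assert (E1 : x (aL C y A1 n0 + length (Bw C y A1 n0) + i)%nat = nth i (Aseq C y A1 n0) 0%nat)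
      by (rewrite <- H3; f_equal; lia).
    assert (E2 : x i = nth i (Aseq C y A1 n0) 0%nat) by (rewrite <- H0; reflexivity).
    congruence. }
  assert (HnPx : ~ Pi x).
  { intros HP. apply HA1. exists x. split; auto. intros i Hi.
    pose proof (hasw_T C y A1 0 HAne i Hi) as H. change (Aseq C y A1 0) with A1 in H.
    rewrite <- H. reflexivity. }
  assert (Part1 : forall z, omega_B k x z -> Pi z).
  { intros z [Hz Hpos]. apply NNPP; intro Hnz.
    assert (HL : exists L, ~ contained Pi (first_syms z L)).
    { apply NNPP; intro Hall. apply Hnz, Hclosed; auto. intros eps Heps.
      destruct (small_pow eps Heps) as [L HL].
      assert (Hc : contained Pi (first_syms z L)) by (apply NNPP; intro; apply Hall; eauto).
      destruct Hc as [p [Hp Hpre]]. exists p; split; auto.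
      eapply Rle_lt_trans; [|exact HL]. apply dist_agree. intros i Hi.
      rewrite <- Hpre by (rewrite length_first; auto). rewrite nth_first; auto. }
    destruct HL as [L HL].
    apply (ub_not_pos (Nset x (Defs.ball k z (/2^L)))).
    { intros D _. destruct (occ_density Pi HPs C y A1 (first_syms z L) HL HAne HCc HYc D) as [K HK].
      exists K. intros s I. eapply Nat.le_trans; [|apply HK]. apply Nat.mul_le_mono_l.
      apply cntn_mono. intros q _ [Hq1 [Hq2 Hq3]]. intros i Hi. rewrite length_first in Hi.
      rewrite nth_first by auto. apply (dist_diff _ _ L Hq3 i Hi). }
    apply Hpos. apply Rinv_0_lt_compat, pow_lt; lra. }
  split; [exact Part1|].
  split.
  { intros z Hz. split; [apply HPk; auto|]. intros eps Heps N.
    destruct (small_pow eps Heps) as [L HL].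
    assert (Hex : forall j, exists c, C c = first_syms z (L + j)).
    { intros j. apply HCall. apply word_over_first; auto.
      exists z. split; auto. intros i Hi. rewrite length_first in Hi. apply nth_first; auto. }
    set (f := fun j => proj1_sig (ConstructiveEpsilon.constructive_indefinite_ground_description_nat _
                 (fun c => list_eq_dec Nat.eq_dec (C c) (first_syms z (L + j))) (Hex j))).
    assert (Hf : forall j, C (f j) = first_syms z (L + j)).
    { intros j. unfold f. destruct ConstructiveEpsilon.constructive_indefinite_ground_description_nat; auto. }
    assert (Hinj : forall i j, f i = f j -> i = j).
    { intros i j E. assert (E2 : C (f i) = C (f j)) by (rewrite E; auto).
      rewrite !Hf in E2. apply (f_equal (@length nat)) in E2. rewrite !length_first in E2. lia. }
    assert (Hpig : exists j, (j <= N)%nat /\ (N <= f j)%nat).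
    { apply NNPP; intro Hno.
      assert (Hlt : forall j, (j <= N)%nat -> (f j < N)%nat).
      { intros j Hj. apply NNPP; intro Hc. apply Hno. exists j. split; lia. }
      assert (Hnd : NoDup (map f (seq 0 (S N)))).
      { apply NoDup_map_NoDup_ForallPairs. intros a b _ _. apply Hinj. apply seq_NoDup. }
      assert (Hinc : incl (map f (seq 0 (S N))) (seq 0 N)).
      { intros a Ha. apply in_map_iff in Ha. destruct Ha as [j [<- Hj]].
        apply in_seq in Hj. apply in_seq. specialize (Hlt j ltac:(lia)). lia. }
      pose proof (NoDup_incl_length Hnd Hinc). rewrite length_map, !length_seq in H. lia. }
    destruct Hpig as [j [Hj1 Hj2]].
    pose proof (Hf j) as Hfc. set (c := f j) in *.
    exists (aL C y A1 c). pose proof (aL_ge C y A1 c HAne). split; [lia|].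
    eapply Rle_lt_trans; [apply (dist_agree _ _ L)|exact HL]. intros i Hi. unfold shift_iter.
    destruct (hasw_block C y A1 x c 0 (hasw_T C y A1 (S c) HAne)) as (_ & H2 & _).
    unfold Bw in H2. apply hasw_app in H2. destruct H2 as [H2 _].
    assert (Hi' : (i < length (C c))%nat) by (rewrite Hfc, length_first; lia).
    specialize (H2 i Hi'). rewrite Hfc, nth_first in H2 by lia. rewrite <- H2. f_equal. }
  split.
  { exists x. split; auto. split; auto. intros eps Heps N.
    destruct (small_pow eps Heps) as [L HL]. destruct (Hrec L N) as [q [Hq1 [_ Hq3]]].
    exists q. split; auto. eapply Rle_lt_trans; [apply (dist_agree _ _ L)|exact HL]. exact Hq3. }
  split.
  { split; auto. intros eps Heps.
    destruct (small_pow eps Heps) as [L HL]. destruct (Hrec L 1%nat) as [q [Hq1 [_ Hq3]]].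
    exists q. split; auto. split.
    - intros i. apply Hxs.
    - eapply Rle_lt_trans; [apply (dist_agree _ _ L)|exact HL]. exact Hq3. }
  intros [Hs Hb]. apply HnPx. apply Part1. split; auto.
Qed.
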